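(* Let $f:\{0,1\}^N\to\{0,1\}$ be a partial function. Then \[\mathrm{D}(f)\leq 2\mathrm{R}_0(f)\mathrm{Bal}(f).\]
   Context: $\mathrm{D}(f)$ is deterministic and $\mathrm{R}_0(f)$ zero-error randomized query complexity. $\mathrm{Bal}(f)$ is $0$ if $f$ is constant, and otherwise $\min\{1+\log|f^{-1}(0)|,\,1+\log|f^{-1}(1)|\}$ (log base 2). *)

(* Defs.v *)
From mathcomp Require Import all_boot all_order all_algebra.
From mathcomp Require Import all_classical all_reals all_analysis.
From Stdlib Require List.
Set Implicit Arguments. Unset Strict Implicit. Unset Printing Implicit Defensive.
Import Order.TTheory GRing.Theory Num.Theory.
Local Open Scope ring_scope.

Definition input (N : nat) := {ffun 'I_N -> bool}.

(* A partial Boolean function: None outside the domain. *)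
Definition pfun (N : nat) := input N -> option bool.

Definition in_dom N (f : pfun N) (x : input N) : bool := f x != None.

Inductive dtree (N : nat) : Type :=
| Leaf of bool
| Node of 'I_N & dtree N & dtree N.

Arguments Leaf {N}.
Arguments Node {N}.

Fixpoint dt_eval N (t : dtree N) (x : input N) : bool :=
  match t with
  | Leaf b => b
  | Node i t0 t1 => if x i then dt_eval t1 x else dt_eval t0 x
  end.

Fixpoint dt_cost N (t : dtree N) (x : input N) : nat :=
  match t with
  | Leaf _ => 0
  | Node i t0 t1 => (if x i then dt_cost t1 x else dt_cost t0 x).+1
  end.

Fixpoint dt_depth N (t : dtree N) : nat :=
  match t with
  | Leaf _ => 0
  | Node _ t0 t1 => (maxn (dt_depth t0) (dt_depth t1)).+1
  end.

Definition computes N (f : pfun N) (t : dtree N) : Prop :=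
  forall x : input N, in_dom f x -> f x = Some (dt_eval t x).

Definition Dq (R : realType) N (f : pfun N) : R :=
  inf [set (dt_depth t)%:R | t in [set t : dtree N | computes f t]].

(* A randomized decision tree: a finitely supported probability distribution
   over deterministic decision trees (list of (weight, tree) pairs). *)
Definition rdtree (R : realType) N := seq (R * dtree N).

Definition is_distr (R : realType) N (mu : rdtree R N) : Prop :=
  (forall p, List.In p mu -> 0 <= p.1) /\ \sum_(p <- mu) p.1 = 1.

Definition zero_error (R : realType) N (f : pfun N) (mu : rdtree R N) : Prop :=
  is_distr mu /\ forall p, List.In p mu -> computes f p.2.

Definition exp_cost (R : realType) N (mu : rdtree R N) (x : input N) : R :=
  \sum_(p <- mu) p.1 * (dt_cost p.2 x)%:R.

Definition worst_exp_cost (R : realType) N (f : pfun N) (mu : rdtree R N) : R :=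
  \big[Num.max/0]_(x : input N | in_dom f x) exp_cost mu x.

Definition R0q (R : realType) N (f : pfun N) : R :=
  inf [set worst_exp_cost f mu | mu in [set mu : rdtree R N | zero_error f mu]].

Definition log2 (R : realType) (x : R) : R := ln x / ln 2.

Definition preim_size N (f : pfun N) (b : bool) : nat :=
  #|[set x : input N | f x == Some b]|.

Definition Bal (R : realType) N (f : pfun N) : R :=
  if (preim_size f false == 0)%N || (preim_size f true == 0)%N then 0
  else Num.min (1 + log2 (preim_size f false)%:R)
               (1 + log2 (preim_size f true)%:R).

(* Main.v *)
Require Import Defs.
From mathcomp Require Import all_boot all_order all_algebra.
From mathcomp Require Import all_classical all_reals all_analysis.
From mathcomp Require Import zify lra.
From Stdlib Require Import Lia.
Import Order.TTheory GRing.Theory Num.Theory.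
Set Implicit Arguments. Unset Strict Implicit.
Local Open Scope ring_scope.

Fixpoint graft {N} (T : dtree N) (d : nat) (t' : dtree N) : dtree N :=
  match T with
  | Leaf b => Leaf b
  | Node i t0 t1 => match d with 0%N => t' | d'.+1 => Node i (graft t0 d' t') (graft t1 d' t') end
  end.

Lemma graft_depth N (T t' : dtree N) d : (dt_depth (graft T d t') <= d + dt_depth t')%N.
Proof.
elim: T d => [b|i t0 IH0 t1 IH1] [|d] //=.
by rewrite ltnS geq_max (leq_trans (IH0 d)) ?(leq_trans (IH1 d)).
Qed.

Lemma graft_eval N (T t' : dtree N) d x :
  dt_eval (graft T d t') x = if (dt_cost T x <= d)%N then dt_eval T x else dt_eval t' x.
Proof.
elim: T d => [b|i t0 IH0 t1 IH1] [|d] //=; by case: (x i).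
Qed.

Lemma has_In T (P : pred T) s : has P s -> exists p, List.In p s /\ P p.
Proof.
elim: s => //= a s IH /orP [Ha|/IH [p [Hp HP]]]; [exists a | exists p]; tauto.
Qed.

Lemma nhas_In T (P : pred T) s : ~~ has P s -> forall p, List.In p s -> ~~ P p.
Proof.
elim: s => //= a s IH; rewrite negb_or => /andP [Ha Hs] p [<-//|]; exact: IH.
Qed.

Lemma sum_ind_card (R : realType) (T : finType) (A : {set T}) (P : pred T) :
  \sum_(x in A) ((P x)%:R : R) = #|[set x in A | P x]|%:R.
Proof.
rewrite -sum1_card natr_sum big_mkcond /= [RHS]big_mkcond /=.
by apply: eq_bigr => x _; rewrite inE; case: (x \in A); case: (P x).
Qed.

Lemma ler_sum_In (R : realType) T (s : seq T) (F G : T -> R) :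
  (forall p, List.In p s -> F p <= G p) -> \sum_(p <- s) F p <= \sum_(p <- s) G p.
Proof.
elim: s => [|a s IH] H; first by rewrite !big_nil.
rewrite !big_cons lerD //; first by apply: H; left.
by apply: IH => p Hp; apply: H; right.
Qed.

Lemma find_good (R : realType) N (b : bool) (f : pfun N) (mu : rdtree R N) (d : nat)
  (S : {set input N}) :
  is_distr mu ->
  (forall x, f x = Some b -> 1 <= 2 * \sum_(p <- mu) p.1 * ((dt_cost p.2 x <= d)%N)%:R) ->
  (forall x, x \in S -> f x = Some b) -> (0 < #|S|)%N ->
  exists p, List.In p mu /\ (#|S| <= 2 * #|[set x in S | (dt_cost p.2 x <= d)%N]|)%N.
Proof.
move=> [w0 w1] Hm HS S0.
case H: (has (fun p : R * dtree N => #|S| <= 2 * #|[set x in S | (dt_cost p.2 x <= d)%N]|)%N mu).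
  by apply: has_In.
have Hall := nhas_In (negbT H).
have E1 : (#|S|%:R : R) <= \sum_(x in S) 2 * \sum_(p <- mu) p.1 * ((dt_cost p.2 x <= d)%N)%:R.
  rewrite -sum1_card natr_sum; apply: ler_sum => x xS; exact: Hm (HS x xS).
have E2 : \sum_(x in S) 2 * \sum_(p <- mu) p.1 * ((dt_cost p.2 x <= d)%N)%:R
   = \sum_(p <- mu) p.1 * (2 * #|[set x in S | (dt_cost p.2 x <= d)%N]|)%:R.
  rewrite -mulr_sumr exchange_big mulr_sumr; apply: eq_bigr => p _.
  by rewrite -mulr_sumr natrM -sum_ind_card mulrCA.
have E3 : \sum_(p <- mu) p.1 * ((2 * #|[set x in S | (dt_cost p.2 x <= d)%N]|)%N)%:R
   <= \sum_(p <- mu) p.1 * (#|S|.-1)%:R.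
  apply: ler_sum_In => p pin; apply: ler_wpM2l; first exact: w0.
  rewrite ler_nat; have := Hall p pin; rewrite -ltnNge; case: #|S| => //.
have E4 : \sum_(p <- mu) p.1 * (#|S|.-1)%:R = (#|S|.-1)%:R.
  by rewrite -mulr_suml w1 mul1r.
have : (#|S|%:R : R) <= (#|S|.-1)%:R.
  by apply: (le_trans E1); rewrite E2 -E4.
rewrite ler_nat; case: #|S| S0 => //= n _; rewrite ltnn => //.
Qed.

Lemma main_tree (R : realType) N (f : pfun N) (b : bool) (mu : rdtree R N) (d : nat) :
  zero_error f mu ->
  (forall x, f x = Some b -> 1 <= 2 * \sum_(p <- mu) p.1 * ((dt_cost p.2 x <= d)%N)%:R) ->
  forall k (S : {set input N}), (forall x, x \in S -> f x = Some b) -> (#|S| < 2^k)%N ->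
  exists t, (dt_depth t <= d * k)%N /\
    forall x, in_dom f x -> (f x = Some b -> x \in S) -> f x = Some (dt_eval t x).
Proof.
move=> [Hd Hc] Hm k; elim: k => [|k IH] S HS Sk;
  (case: (posnP #|S|) => [S0|Spos];
  [ exists (Leaf (~~ b)); split => // x; rewrite /in_dom; case E: (f x) => [c|] // _ H;
    case: (c =P b) => [cb|ncb];
    [ have : x \in S by (apply: H; rewrite cb)
    | by destruct b, c; simpl; try reflexivity; exfalso; apply: ncb ]
  | ]); first (by rewrite (card0_eq S0));
  first (by move: Sk Spos; rewrite expn0; case: #|S|); first (by rewrite (card0_eq S0)).
have [p [pin Hp]] := find_good Hd Hm HS Spos.
pose S' := [set x in S | (d < dt_cost p.2 x)%N].
have HS' : forall x, x \in S' -> f x = Some b by move=> x; rewrite inE => /andP [/HS].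
have S'k : (#|S'| < 2 ^ k)%N.
  have := cardsID [set x | (dt_cost p.2 x <= d)%N] S.
  have -> : S :&: [set x | (dt_cost p.2 x <= d)%N] = [set x in S | (dt_cost p.2 x <= d)%N].
    by apply/setP => x; rewrite !inE.
  have -> : S :\: [set x | (dt_cost p.2 x <= d)%N] = S'.
    by apply/setP => x; rewrite !inE ltnNge andbC.
  move: Hp Sk; rewrite expnS; move: #|[set x in S | _]| => a; move: #|[set x in S | _]| => a2; move: (2 ^ k)%N #|S| => K s; lia.
have [t' [Dt' Ct']] := IH S' HS' S'k.
exists (graft p.2 d t'); split.
  by rewrite mulnS (leq_trans (graft_depth _ _ _)) // leq_add2l.
move=> x xd Hx; rewrite graft_eval.
case: leqP => Hc'; first exact: Hc.
apply: Ct' => // /Hx xS; rewrite inE xS.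
done.
Qed.

Lemma bigmax_seq_ge (R : realType) (T : eqType) (r : seq T) (P : pred T) (F : T -> R) x :
  x \in r -> P x -> F x <= \big[Num.max/0]_(y <- r | P y) F y.
Proof.
elim: r => //= a r IH; rewrite in_cons big_cons => /orP [/eqP <- -> | xr Px].
  by rewrite le_max lexx.
case: (P a); last exact: IH.
by rewrite le_max IH ?orbT.
Qed.

Lemma bigmax_seq_ge0 (R : realType) (T : eqType) (r : seq T) (P : pred T) (F : T -> R) :
  0 <= \big[Num.max/0]_(y <- r | P y) F y.
Proof.
elim: r => [|a r IH]; first by rewrite big_nil.
rewrite big_cons; case: (P a) => //; by rewrite le_max IH orbT.
Qed.

Lemma worst_ge (R : realType) N (f : pfun N) (mu : rdtree R N) x :
  in_dom f x -> exp_cost mu x <= worst_exp_cost f mu.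
Proof. move=> Hx; apply: bigmax_seq_ge => //; exact: mem_index_enum. Qed.

Lemma worst_ge0 (R : realType) N (f : pfun N) (mu : rdtree R N) :
  0 <= worst_exp_cost f mu.
Proof. exact: bigmax_seq_ge0. Qed.

Lemma markov_q (R : realType) N (f : pfun N) (mu : rdtree R N) (b : bool) :
  is_distr mu ->
  let d := Num.truncn (2 * worst_exp_cost f mu) in
  forall x, f x = Some b -> 1 <= 2 * \sum_(p <- mu) p.1 * ((dt_cost p.2 x <= d)%N)%:R.
Proof.
move=> [w0 w1] d x fx.
have xd : in_dom f x by rewrite /in_dom fx.
set c := worst_exp_cost f mu.
have [dle dlt] : (d%:R <= 2 * c) /\ (2 * c < d.+1%:R).
  by apply/andP; apply: truncn_itv; rewrite mulr_ge0 // worst_ge0.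
set A := \sum_(p <- mu) p.1 * ((dt_cost p.2 x <= d)%N)%:R.
set B := \sum_(p <- mu) p.1 * ((d < dt_cost p.2 x)%N)%:R.
have AB : A + B = 1.
  rewrite -w1 /A /B -big_split /=; apply: eq_bigr => p _.
  by rewrite -mulrDr -natrD; case: leqP; rewrite ?addn0 ?add0n mulr1.
have HB : B * d.+1%:R <= c.
  apply: le_trans (worst_ge mu xd); rewrite /B /exp_cost mulr_suml.
  apply: ler_sum_In => p pin; rewrite -mulrA; apply: ler_wpM2l; first exact: w0.
  by case: ltnP => H; rewrite ?mul0r // mul1r ler_nat.
have Bge : 0 <= B.
  rewrite /B; elim: (mu) w0 => [|a s IH] W; first by rewrite big_nil.
  rewrite big_cons addr_ge0 ?mulr_ge0 //; first by apply: W; left.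
  by apply: IH => p Hp; apply: W; right.
have : 2 * B < 1.
  have dpos : (0 : R) < d.+1%:R by rewrite ltr0n.
  rewrite -(ltr_pM2r dpos) mul1r; apply: le_lt_trans dlt.
  by rewrite -mulrA ler_wpM2l.
have -> : A = 1 - B by rewrite -AB addrK.
move=> H; lra.
Qed.

Lemma log_bound (R : realType) (m : nat) : (0 < m)%N ->
  ((trunc_log 2 m).+1%:R : R) <= 1 + log2 (m%:R : R).
Proof.
move=> m0; rewrite -addn1 natrD addrC lerD2l /log2.
have l2 : (0 : R) < ln 2 by apply: ln_gt0; rewrite ltr1n.
rewrite ler_pdivlMr //.
have := trunc_logP (isT : (1 < 2)%N) m0; set t := trunc_log 2 m => H.
rewrite mulr_natl -lnXn ?ltr0n // ler_ln ?posrE ?exprn_gt0 ?ltr0n //.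
by rewrite -natrX ler_nat.
Qed.

Lemma Dq_le (R : realType) N (f : pfun N) (t : dtree N) :
  computes f t -> Dq R f <= (dt_depth t)%:R.
Proof.
move=> Ht; apply: ge_inf; last by exists t.
by exists 0 => y [t' _ <-].
Qed.

Lemma per_b (R : realType) N (f : pfun N) (b : bool) (mu : rdtree R N) :
  zero_error f mu -> (0 < preim_size f b)%N ->
  Dq R f <= 2 * worst_exp_cost f mu * (1 + log2 (preim_size f b)%:R).
Proof.
move=> Hz m0; set c := worst_exp_cost f mu.
set d := Num.truncn (2 * c).
have Hm := @markov_q R N f mu b Hz.1.
set k := (trunc_log 2 (preim_size f b)).+1.
set S := [set x | f x == Some b].
have HS : forall x, x \in S -> f x = Some b by move=> x; rewrite inE => /eqP.
have Sk : (#|S| < 2 ^ k)%N by apply: trunc_log_ltn.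
have [t [Dt Ct]] := main_tree Hz Hm HS Sk.
have comp : computes f t by move=> x xd; apply: Ct => // H; rewrite inE H.
apply: (le_trans (Dq_le R comp)); apply: (@le_trans _ _ ((d * k)%:R)); first by rewrite ler_nat.
rewrite natrM; apply: ler_pM; rewrite ?ler0n //.
  have c0 : 0 <= 2 * c by rewrite mulr_ge0 // worst_ge0.
  by have /andP [] := truncn_itv c0.
exact: log_bound.
Qed.

Lemma log2_ge0 (R : realType) (m : nat) : (0 < m)%N -> 0 <= log2 (m%:R : R).
Proof.
move=> m0; rewrite /log2 divr_ge0 // ln_ge0 // ?ler1n // ltW // ltr1n.
Qed.

Theorem theorem24 (R : realType) (N : nat) (f : pfun N) :
  Dq R f <= 2 * R0q R f * Bal R f.
Proof.
rewrite /Bal; case: ifP => [H|H].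
  rewrite mulr0.
  have [b Hb] : exists b, preim_size f b = 0%N.
    by case/orP: H => /eqP H; [exists false|exists true].
  apply: (le_trans (Dq_le R (t := Leaf (~~ b)) _)) => // x.
  rewrite /in_dom; case E: (f x) => [c|] // _.
  case: (c =P b) => [cb|ncb]; last by destruct b, c; simpl; try reflexivity; exfalso; apply: ncb.
  have : x \in [set x | f x == Some b] by rewrite inE E cb.
  by rewrite (card0_eq Hb).
move/negbT: H; rewrite negb_or -!lt0n => /andP [m0 m1].
set B := Num.min _ _.
have Bpos : 0 < B.
  by rewrite lt_min; apply/andP; split; apply: (lt_le_trans ltr01); rewrite lerDl log2_ge0.
have key : forall mu, zero_error f mu -> Dq R f <= 2 * worst_exp_cost f mu * B.
  move=> mu Hz; rewrite /B minElt; case: ifP => _.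
    exact: per_b.
  exact: per_b.
case: (pselect (exists mu : rdtree R N, zero_error f mu)) => [[mu0 Hmu0]|Hno].
  have : Dq R f / (2 * B) <= R0q R f.
    apply: lb_le_inf; first by exists (worst_exp_cost f mu0), mu0.
    move=> y [mu Hz <-]; rewrite ler_pdivrMr ?mulr_gt0 //.
    by rewrite mulrA [_ * 2]mulrC; exact: key.
  by rewrite ler_pdivrMr ?mulr_gt0 // mulrA [_ * 2]mulrC.
have E1 : [set worst_exp_cost f mu | mu in [set mu : rdtree R N | zero_error f mu]]%classic = set0 :> set R.
  by apply/seteqP; split => // y [mu Hz _]; apply: Hno; exists mu.
have E2 : [set (dt_depth t)%:R | t in [set t : dtree N | computes f t]]%classic = set0 :> set R.
  apply/seteqP; split => // y [t Ht _]; apply: Hno; exists [:: (1, t)]; split.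
    split; last by rewrite big_cons big_nil addr0.
    by move=> p [<-|] //=.
  by move=> p [<-|].
by rewrite /Dq /R0q E1 E2 inf0 mulr0 mul0r.
Qed.
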